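(* Let $n\ge 1$ and let $G$ be a subgraph of the complete bipartite graph $K_{n,n}$. Then $G$ can be embedded in any projective plane of order at least $n$.
   Context: A finite projective plane of order $q$ has $q^2+q+1$ points and lines, $q+1$ points on each line and $q+1$ lines through each point; any two distinct points lie on a unique line and any two lines meet in a unique point. An embedding of a simple graph $G=(V,E)$ into a projective plane is an injective map $\phi$ from $V$ to the points such that the induced map sending an edge $ab$ to the line through $\phi(a),\phi(b)$ is injective on $E$. *)

(* Defs.v *)
From mathcomp Require Import all_boot.
Set Implicit Arguments. Unset Strict Implicit. Unset Printing Implicit Defensive.

Definition projective_plane (q : nat) (P L : finType) (inc : P -> L -> bool) : Prop :=
  [/\ #|P| = q ^ 2 + q + 1 /\ #|L| = q ^ 2 + q + 1,
      (forall l : L, #|[set p | inc p l]| = q.+1),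
      (forall p : P, #|[set l | inc p l]| = q.+1),
      (forall p1 p2 : P, p1 != p2 ->
          exists! l : L, inc p1 l && inc p2 l) &
      (forall l1 l2 : L, l1 != l2 ->
          exists! p : P, inc p l1 && inc p l2)].

(* The line through two points (well defined for distinct points in a plane). *)
Definition line_through (P L : finType) (inc : P -> L -> bool) (p1 p2 : P)
  : option L := [pick l | inc p1 l && inc p2 l].

Definition simple_graph (V : finType) (e : rel V) : Prop :=
  symmetric e /\ irreflexive e.

Definition side (n : nat) (x : 'I_n + 'I_n) : bool :=
  if x is inl _ then true else false.

Definition subgraph_Knn (n : nat) (V : finType) (e : rel V) : Prop :=
  exists f : V -> 'I_n + 'I_n, injective f /\
    (forall a b, e a b -> side (f a) != side (f b)).

Definition embedding (V : finType) (e : rel V) (P L : finType)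
  (inc : P -> L -> bool) (phi : V -> P) : Prop :=
  injective phi /\
  (forall a b c d, e a b -> e c d ->
     line_through inc (phi a) (phi b) = line_through inc (phi c) (phi d) ->
     (a = c /\ b = d) \/ (a = d /\ b = c)).

(* Main.v *)
Require Import Defs.
From mathcomp Require Import all_boot.

Lemma key_pp (P L : finType) (inc : P -> L -> bool) (l l' : L) (O : P)
  (hll' : l != l') (Hu : forall x, inc x l && inc x l' -> x = O)
  (hll : forall l1 l2 : L, l1 != l2 -> exists! p : P, inc p l1 && inc p l2)
  x y z m : inc x l -> inc y l -> inc z l' -> z != O ->
  inc x m -> inc y m -> inc z m -> x = y.
Proof.
move=> xl yl zl' zO xm ym zm.
have hm : l != m.
  apply/eqP => E; subst m.
  by move/eqP: zO; apply; apply: Hu; rewrite zm zl'.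
case: (hll _ _ hm) => p [_ Hq].
rewrite -(Hq x); last by rewrite xl xm.
by rewrite (Hq y) // yl ym.
Qed.

Arguments key_pp {P L inc l l' O} hll' Hu hll {x y z m}.

Theorem theorem3p1 (n : nat) (hn : 1 <= n) (V : finType) (e : rel V)
  (hG : simple_graph e) (hsub : subgraph_Knn n e)
  (q : nat) (hq : n <= q) (P L : finType) (inc : P -> L -> bool)
  (hPP : projective_plane q inc) :
  exists phi : V -> P, embedding e inc phi.
Proof.
case: hPP => [[cP cL] hl hp hpl hll].
case: hG => esym eirr.
case: hsub => f [finj fside].
have : 1 < #|L| by rewrite cL; have := leq_trans hn hq; case: q {cP cL hl hp hq} => // q' _; rewrite !addnS.
case/card_gt1P => l1 [l2 [_ _ hl12]].
case: (hll _ _ hl12) => O [HO Hu].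
have Hu1 x : inc x l1 && inc x l2 -> x = O by move=> H; rewrite (Hu x H).
have Hu2 x : inc x l2 && inc x l1 -> x = O by rewrite andbC; apply: Hu1.
have hl21 : l2 != l1 by rewrite eq_sym.
set S1 := [set p | inc p l1] :\ O.
set S2 := [set p | inc p l2] :\ O.
have cS (l : L) : inc O l -> #|[set p | inc p l] :\ O| = q.
  move=> Ol; have := cardsD1 O [set p | inc p l].
  by rewrite hl inE Ol add1n => [[]].
have hO1 : inc O l1 by case/andP: HO.
have hO2 : inc O l2 by case/andP: HO.
pose g1 (i : 'I_n) := nth O (enum S1) i.
pose g2 (i : 'I_n) := nth O (enum S2) i.
have szS (S : {set P}) (cs : #|S| = q) (i : 'I_n) : i < size (enum S).
  by rewrite -cardE cs; exact: leq_trans (ltn_ord i) hq.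
have gP (S : {set P}) (cs : #|S| = q) (i : 'I_n) : nth O (enum S) i \in S.
  by rewrite -mem_enum; apply: mem_nth; apply: szS.
have ginj (S : {set P}) (cs : #|S| = q) : injective (fun i : 'I_n => nth O (enum S) i).
  move=> i j /eqP; rewrite nth_uniq ?enum_uniq ?szS //.
  by move/eqP; apply: val_inj.
have c1 := cS _ hO1; have c2 := cS _ hO2.
pose phi v := match f v with inl i => g1 i | inr j => g2 j end.
have inS1 p : p \in S1 -> (p != O) && inc p l1 by rewrite !inE.
have inS2 p : p \in S2 -> (p != O) && inc p l2 by rewrite !inE.
have phiA v : side (f v) -> phi v \in S1.
  by rewrite /phi; case: (f v) => // i _; apply: gP.
have phiB v : ~~ side (f v) -> phi v \in S2.
  by rewrite /phi; case: (f v) => // i _; apply: gP.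
have phiinj : injective phi.
  move=> u v; rewrite /phi.
  case Eu: (f u) => [i|i]; case Ev: (f v) => [j|j] E.
  - by apply: finj; rewrite Eu Ev (ginj _ c1 _ _ E).
  - have := gP _ c1 i; have := gP _ c2 j; rewrite /g1 /g2 in E; rewrite E.
    move=> /inS2 /andP [nO h2] /inS1 /andP [_ h1].
    by move/eqP: nO; case; apply: Hu1; rewrite h1 h2.
  - have := gP _ c2 i; have := gP _ c1 j; rewrite /g1 /g2 in E; rewrite E.
    move=> /inS1 /andP [nO h1] /inS2 /andP [_ h2].
    by move/eqP: nO; case; apply: Hu1; rewrite h1 h2.
  - by apply: finj; rewrite Eu Ev (ginj _ c2 _ _ E).
exists phi; split => // a b c d eab ecd.
have neq u v : e u v -> phi u != phi v.
  move=> euv; apply/eqP => /phiinj E; subst v; by rewrite eirr in euv.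
have lt u v : e u v -> exists m, line_through inc (phi u) (phi v) = Some m /\
    inc (phi u) m /\ inc (phi v) m.
  move=> euv; rewrite /line_through; case: pickP => [m /andP [h1 h2]|H0].
    by exists m.
  case: (hpl _ _ (neq _ _ euv)) => m [Hm _]; by rewrite H0 in Hm.
case: (lt _ _ eab) => m [-> [am bm]].
case: (lt _ _ ecd) => m' [-> [cm dm]] [Em]; subst m'.
have sab := fside _ _ eab; have scd := fside _ _ ecd.
case sa: (side (f a)) sab; case sc: (side (f c)) scd;
  case sb: (side (f b)) => //; case sd: (side (f d)) => // _ _.
- have /inS1/andP [aO a1] := phiA _ sa.
  have /inS1/andP [cO c1'] := phiA _ sc.
  have /inS2/andP [bO b2] := phiB _ (negbT sb).
  have /inS2/andP [dO d2] := phiB _ (negbT sd).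
  left; split; apply: phiinj.
  + exact: (key_pp hl12 Hu1 hll a1 c1' b2 bO am cm bm).
  + exact: (key_pp hl21 Hu2 hll b2 d2 a1 aO bm dm am).
- have /inS1/andP [aO a1] := phiA _ sa.
  have /inS1/andP [dO d1] := phiA _ sd.
  have /inS2/andP [bO b2] := phiB _ (negbT sb).
  have /inS2/andP [cO c2'] := phiB _ (negbT sc).
  right; split; apply: phiinj.
  + exact: (key_pp hl12 Hu1 hll a1 d1 b2 bO am dm bm).
  + exact: (key_pp hl21 Hu2 hll b2 c2' a1 aO bm cm am).
- have /inS1/andP [bO b1] := phiA _ sb.
  have /inS1/andP [cO c1'] := phiA _ sc.
  have /inS2/andP [aO a2] := phiB _ (negbT sa).
  have /inS2/andP [dO d2] := phiB _ (negbT sd).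
  right; split; apply: phiinj.
  + exact: (key_pp hl21 Hu2 hll a2 d2 b1 bO am dm bm).
  + exact: (key_pp hl12 Hu1 hll b1 c1' a2 aO bm cm am).
- have /inS1/andP [bO b1] := phiA _ sb.
  have /inS1/andP [dO d1] := phiA _ sd.
  have /inS2/andP [aO a2] := phiB _ (negbT sa).
  have /inS2/andP [cO c2'] := phiB _ (negbT sc).
  left; split; apply: phiinj.
  + exact: (key_pp hl21 Hu2 hll a2 c2' b1 bO am cm bm).
  + exact: (key_pp hl12 Hu1 hll b1 d1 a2 aO bm dm am).
Qed.
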